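(* Let $g\ge 2$, $n\ge 2$, let $(t_1,\ldots,t_n)$ be a generic $n$-tuple of elements of $T$, let $l\neq m$ be elements of $\{1,\ldots,n\}$, let $A$ be a subset of $\{a_1,\ldots,a_g,b_1,\ldots,b_g\}\cup\{c_j \mid j\in\{1,\ldots,n\}\setminus\{l,m\}\}$, and let $(i,j,k)$ and $(u,v,w)$ be permutations of $(1,2,3)$. Then the collection of sections $$\{s^l_{ij}(x), s^l_{ik}(x) \mid x\in A\}\cup\{s^l_{u,j}(c_m), s^l_{u,k}(c_m)\}$$ has the same common vanishing locus in $S_g(t_1,\ldots,t_n)$ as the collection $$\{s^m_{uv}(x), s^m_{uw}(x)\mid x\in A\}\cup\{s^m_{i,v}(c_l), s^m_{i,w}(c_l)\}.$$
   Context: Let $\Sigma$ be a compact Riemann surface of genus $g$, $p_1,\ldots,p_n\in\Sigma$ distinct points, and fix the presentation $\pi_1(\Sigma\setminus\{p_1,\ldots,p_n\}) = \langle a_1,\ldots,a_g,b_1,\ldots,b_g,c_1,\ldots,c_n \mid \prod_{i=1}^g[a_i,b_i]=\prod_{j=1}^n c_j\rangle$. Let $G=SU(3)$, $T\subset G$ the diagonal maximal torus. An $n$-tuple $(t_1,\ldots,t_n)$ in $T$ is generic if each $t_j$ has centralizer $T$ in $G$ and no product $\lambda_1\cdots\lambda_n$ with $\lambda_i$ an eigenvalue of $t_i$ equals $1$. Let $S_g(t_1,\ldots,t_n) := \{\rho\in\mathrm{Hom}(\pi_1(\Sigma\setminus\{p_1,\ldots,p_n\}),G)\mid\rho(c_i)\sim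 t_i\ \forall i\}/G$ (conjugation quotient), and $V^l_g(t_1,\ldots,t_n):=\{\rho\mid\rho(c_l)=t_l,\ \rho(c_i)\sim t_i\ \forall i\}$, a $T$-bundle over $S_g(t_1,\ldots,t_n)$ under conjugation. For $1\le j,k\le 3$ let $\mathbb{C}_{(jk)}$ (resp. $\mathbb{C}_{(j)}$) be the representation of $T$ in which $\mathrm{diag}(e^{i\theta_1},e^{i\theta_2},e^{i\theta_3})$ acts by $e^{i(\theta_j-\theta_k)}$ (resp. $e^{i\theta_j}$), and $L^l_{jk}$ (resp. $L^l_j$) the associated line bundle $(V^l_g(t_1,\ldots,t_n)\times\mathbb{C}_{(jk)})/T$ (resp. with $\mathbb{C}_{(j)}$). Two kinds of sections are used (note the comma distinguishing them). (i) For a generator $x\in\{a_1,\ldots,a_g,b_1,\ldots,b_g,c_1,\ldots,c_n\}\setminus\{c_l\}$, $s^l_{jk}(x)$ is the section of $L^l_{jk}$ induced by the $T$-equivariant map $V^l_g(t_1,\ldots,t_n)\to\mathbb{C}_{(jk)}$, $\rho\mapsto(\rho(x))_{jk}$ (the $(j,k)$ matrix entry); it vanishes at $[\rho]$ iff $(\rho(x))_{jk}=0$ for a representative $\rho\in V^l_g(t_1,\ldots,t_n)$. (ii) For $c_{i'}$ with $i'\neq l$, $s^l_{j,k}(c_{i'})$ is a section of $L^l_j$ defined via a matrix $A\in SU(3)$ with $A\rho(c_{i'})A^{-1}=t_{i'}$ (for a representative $\rho\in V^l_g(t_1,\ldots,t_n)$; $A$ is unique up to left multiplication by $T$), taking value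 given by the entry $A_{jk}$; it vanishes at $[\rho]$ iff $A_{jk}=0$, equivalently iff the $k$-th coordinate of an eigenvector of $\rho(c_{i'})$ with eigenvalue $(t_{i'})_{jj}$ is zero. *)

(* Defs.v *)
From mathcomp Require Import all_boot all_order all_algebra.
From mathcomp Require Import reals.
From mathcomp.real_closed Require Import complex.
Set Implicit Arguments. Unset Strict Implicit. Unset Printing Implicit Defensive.
Import GRing.Theory Num.Theory.
Local Open Scope ring_scope.

Section Defs.
Variable R : realType.
Local Notation C := R[i].

Definition SU3 (M : 'M[C]_3) : bool :=
  (M *m (map_mx (@conjc R) M)^T == 1%:M) && (\det M == 1).

Definition inT (M : 'M[C]_3) : bool := SU3 M && is_diag_mx M.

(* generators of pi_1: a_1..a_g, b_1..b_g, c_1..c_n (0-based indices) *)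
Definition gen (g n : nat) : finType := ('I_g + 'I_g + 'I_n)%type.
Definition ga {g n : nat} (i : 'I_g) : gen g n := inl (inl i).
Definition gb {g n : nat} (i : 'I_g) : gen g n := inl (inr i).
Definition gc {g n : nat} (j : 'I_n) : gen g n := inr j.

Definition commg (x y : 'M[C]_3) : 'M[C]_3 := x * y * x^-1 * y^-1.

(* rho : a homomorphism pi_1(Sigma \ {p_1..p_n}) -> SU(3), given on generators *)
Definition is_hom (g n : nat) (rho : gen g n -> 'M[C]_3) : Prop :=
  (forall x, SU3 (rho x)) /\
  \prod_(i < g) commg (rho (ga i)) (rho (gb i)) = \prod_(j < n) rho (gc j).

Definition conjG (M N : 'M[C]_3) : Prop :=
  exists P : 'M[C]_3, SU3 P /\ P *m M *m invmx P = N.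

Definition generic (n : nat) (t : 'I_n -> 'M[C]_3) : Prop :=
  (forall j, inT (t j)) /\
  (forall j (P : 'M[C]_3), SU3 P -> (P *m t j == t j *m P) = inT P) /\
  (forall lam : 'I_n -> C, (forall j, eigenvalue (t j) (lam j)) ->
      \prod_(j < n) lam j != 1).

(* rho represents a point of S_g(t_1,...,t_n) *)
Definition in_S (g n : nat) (t : 'I_n -> 'M[C]_3) (rho : gen g n -> 'M[C]_3) : Prop :=
  is_hom rho /\ forall j, conjG (rho (gc j)) (t j).

(* rho lies in V^l_g(t_1,...,t_n) *)
Definition in_V (g n : nat) (t : 'I_n -> 'M[C]_3) (l : 'I_n)
  (rho : gen g n -> 'M[C]_3) : Prop :=
  in_S t rho /\ rho (gc l) = t l.

Definition conj_rep (g n : nat) (P : 'M[C]_3) (rho : gen g n -> 'M[C]_3) :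
  gen g n -> 'M[C]_3 := fun x => P *m rho x *m invmx P.

(* vanishing of s^l_{jk}(x) at a representative rho in V^l *)
Definition entry_vanishes (g n : nat) (rho : gen g n -> 'M[C]_3) (x : gen g n)
  (j k : 'I_3) : Prop := rho x j k = 0.

(* vanishing of s^l_{j,k}(c_i') at a representative rho in V^l:
   A_{jk} = 0 for A in SU(3) with A rho(c_i') A^-1 = t_i' *)
Definition eig_vanishes (g n : nat) (t : 'I_n -> 'M[C]_3) (rho : gen g n -> 'M[C]_3)
  (i' : 'I_n) (j k : 'I_3) : Prop :=
  exists A : 'M[C]_3, [/\ SU3 A, A *m rho (gc i') *m invmx A = t i' & A j k = 0].

(* [rho] lies in the common vanishing locus of
   {s^l_{ij}(x), s^l_{ik}(x) | x in A} u {s^l_{u,j}(c_m), s^l_{u,k}(c_m)} *)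
Definition locus (g n : nat) (t : 'I_n -> 'M[C]_3) (l m : 'I_n) (A : {set gen g n})
  (i j k u : 'I_3) (rho : gen g n -> 'M[C]_3) : Prop :=
  exists P : 'M[C]_3, SU3 P /\
    let r := conj_rep P rho in
    [/\ in_V t l r,
        (forall x, x \in A -> entry_vanishes r x i j /\ entry_vanishes r x i k),
        eig_vanishes t r m u j & eig_vanishes t r m u k].

End Defs.

(* Main.v *)
Require Import Defs.
From mathcomp Require Import all_boot all_order all_algebra.
From mathcomp Require Import reals.
From mathcomp.real_closed Require Import complex.
From Stdlib Require Import FunctionalExtensionality.
Set Implicit Arguments. Unset Strict Implicit. Unset Printing Implicit Defensive.
Import GRing.Theory Num.Theory.
Local Open Scope ring_scope.

Section H.
Variable R : realType.
Local Notation C := R[i].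
Local Notation M := ('M[C]_3).

Definition adj (B : M) : M := (map_mx (@conjc R) B)^T.

Lemma SU3E (B : M) : SU3 B -> B *m adj B = 1%:M /\ \det B = 1.
Proof. by case/andP => /eqP -> /eqP ->. Qed.

Lemma SU3_unit (B : M) : SU3 B -> B \in unitmx.
Proof. by case/SU3E => _ d; rewrite unitmxE d unitr1. Qed.

Lemma SU3_inv (B : M) : SU3 B -> invmx B = adj B.
Proof.
move=> sB; have [e _] := SU3E sB.
by rewrite -[invmx B]mulmx1 -e mulKmx // SU3_unit.
Qed.

Lemma adjK (B : M) : SU3 B -> adj B *m B = 1%:M.
Proof. by case/SU3E => e _; apply: mulmx1C. Qed.

Lemma adjM (A B : M) : adj (A *m B) = adj B *m adj A.
Proof. by rewrite /adj map_mxM trmx_mul. Qed.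

Lemma adj_adj (B : M) : adj (adj B) = B.
Proof. by apply/matrixP => a b; rewrite !mxE conjcK. Qed.

Lemma adjE (B : M) a b : adj B a b = conjc (B b a).
Proof. by rewrite !mxE. Qed.

Lemma SU3M (A B : M) : SU3 A -> SU3 B -> SU3 (A *m B).
Proof.
move=> sA sB; have [eA dA] := SU3E sA; have [eB dB] := SU3E sB.
apply/andP; split; last by rewrite det_mulmx dA dB mulr1.
apply/eqP; rewrite -/(adj _) adjM mulmxA -(mulmxA A) eB mulmx1 eA //.
Qed.

Lemma SU3_adj (B : M) : SU3 B -> SU3 (adj B).
Proof.
move=> sB; have [eB dB] := SU3E sB.
apply/andP; split; first by rewrite -/(adj (adj B)) adj_adj adjK.
by rewrite det_tr (det_map_mx (@conjc R : {rmorphism C -> C})) dB rmorph1.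
Qed.


Definition cj (P X : M) : M := P *m X *m invmx P.

Lemma unitE (P : M) : (P \is a GRing.unit) = (P \in unitmx).
Proof. by []. Qed.

Lemma invE (P : M) : P^-1 = invmx P.
Proof. by []. Qed.

Lemma SU3_cj P X : SU3 P -> SU3 X -> SU3 (cj P X).
Proof. by move=> sP sX; rewrite /cj SU3_inv // !SU3M // SU3_adj. Qed.

Lemma cjE P X : cj P X = P * X * P^-1.
Proof. by rewrite /cj invE !mulmxE. Qed.

Lemma cjM P x y : P \in unitmx -> cj P (x * y) = cj P x * cj P y.
Proof.
move=> uP; rewrite !cjE -unitE in uP *.
by rewrite !mulrA mulrVK.
Qed.

Lemma cjV P x : P \in unitmx -> x \in unitmx -> (cj P x)^-1 = cj P x^-1.
Proof.
move=> uP ux; rewrite !cjE -!unitE in uP ux *.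
rewrite !invrM ?invrK ?mulrA ?unitrM ?unitrV ?uP ?ux //.
all: by rewrite unitrMl.
Qed.

Lemma cj_commg P x y : P \in unitmx -> x \in unitmx -> y \in unitmx ->
  Defs.commg (cj P x) (cj P y) = cj P (Defs.commg x y).
Proof.
move=> uP ux uy; rewrite /Defs.commg !cjV // !cjM //.
Qed.

Lemma cj1 P : P \in unitmx -> cj P 1 = 1.
Proof. by move=> uP; rewrite cjE mulr1 mulrV. Qed.

Lemma cj_prod P (I : finType) (F : I -> M) : P \in unitmx ->
  cj P (\prod_(a : I) F a) = \prod_(a : I) cj P (F a).
Proof.
move=> uP; apply: (big_morph (cj P)) => [x y|]; [exact: cjM | exact: cj1].
Qed.


Lemma conjG_cj X T P : SU3 P -> conjG X T -> conjG (cj P X) T.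
Proof.
move=> sP [Q [sQ e]]; exists (Q *m adj P); split; first by rewrite SU3M // SU3_adj.
rewrite SU3_inv ?SU3M ?SU3_adj // adjM adj_adj /cj SU3_inv //.
rewrite SU3_inv // in e; rewrite -e !mulmxA -(mulmxA Q) adjK // mulmx1.
by rewrite -!(mulmxA _ (adj P)) adjK // mulmx1.
Qed.

Lemma in_S_cj g n (t : 'I_n -> M) (rho : gen g n -> M) P :
  SU3 P -> in_S t rho -> in_S t (conj_rep P rho).
Proof.
move=> sP [[sr hr] cr]; have uP := SU3_unit sP.
split; last by move=> j; apply: conjG_cj.
split; first by move=> x; apply: SU3_cj.
rewrite /conj_rep.
rewrite (eq_bigr (fun a => cj P (Defs.commg (rho (ga a)) (rho (gb a))))); last first.
  by move=> a _; rewrite cj_commg // SU3_unit.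
by rewrite -cj_prod // hr cj_prod.
Qed.


Lemma all3 (i j k a : 'I_3) : uniq [:: i; j; k] -> a \in [:: i; j; k].
Proof.
by move: i j k a; do 4! case=> [[|[|[|//]]] ?].
Qed.

Lemma sum3 (F : 'I_3 -> C) (i j k : 'I_3) : uniq [:: i; j; k] ->
  \sum_a F a = F i + F j + F k.
Proof.
move=> u; rewrite (perm_big [:: i; j; k]) /=; last first.
  apply: uniq_perm => //; first exact: index_enum_uniq.
  by move=> a; rewrite mem_index_enum all3.
by rewrite !big_cons big_nil addr0 addrA.
Qed.


Lemma row_zero (B : M) (i j k u v : 'I_3) : SU3 B -> uniq [:: i; j; k] ->
  B u j = 0 -> B u k = 0 -> u != v -> B v i = 0 /\ B u i != 0.
Proof.
move=> sB uijk zj zk uv; have [e _] := SU3E sB.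
have h1 := congr1 (fun X : M => X u v) e; have h2 := congr1 (fun X : M => X u u) e.
move: h1 h2 => /=; rewrite !mxE !(sum3 _ uijk) !adjE zj zk !mul0r !addr0 eqxx (negbTE uv).
move=> h1 h2; have nz : B u i != 0.
  by apply/eqP => z; move: h2; rewrite z mul0r => /eqP; rewrite eq_sym oner_eq0.
split => //; move/eqP: h1; rewrite mulr0n mulf_eq0 (negbTE nz) /= => /eqP h1.
by apply/eqP; rewrite -conjc_eq0 h1.
Qed.

Lemma diag_mulE (D X : M) (u v w : 'I_3) b : is_diag_mx D -> uniq [:: u; v; w] ->
  (D *m X) u b = D u u * X u b.
Proof.
move=> /is_diag_mxP dD uu; rewrite mxE (sum3 _ uu).
move: uu => /=; rewrite !inE negb_or => /andP [/andP [uv uw] _].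
by rewrite (dD u v uv) (dD u w uw) !mul0r !addr0.
Qed.

Lemma diag_nz (D : M) (u v w : 'I_3) : SU3 D -> is_diag_mx D -> uniq [:: u; v; w] ->
  D u u != 0.
Proof.
move=> sD dD uu; have [e _] := SU3E sD.
have h := congr1 (fun X : M => X u u) e; move: h => /=.
rewrite (diag_mulE _ _ dD uu) !mxE eqxx mulr1n => h.
by apply/eqP => z; move: h; rewrite z mul0r => /eqP; rewrite eq_sym oner_eq0.
Qed.


Lemma dir g n (t : 'I_n -> M) (l m : 'I_n) (A : {set gen g n})
  (i j k u v w : 'I_3) (rho : gen g n -> M) :
  generic t -> uniq [:: i; j; k] -> uniq [:: u; v; w] ->
  locus t l m A i j k u rho -> locus t m l A u v w i rho.
Proof.
move=> [_ [cent _]] uijk uuvw [P [sP [[Sr rl] HA [A1 [sA1 e1 z1]] [A2 [sA2 e2 z2]]]]].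
set r := conj_rep P rho in Sr rl HA e1 e2 *.
have e1' := e1; rewrite SU3_inv // in e1; rewrite SU3_inv // in e2.
pose D := A2 *m adj A1.
have sD : SU3 D by rewrite SU3M // SU3_adj.
have cD : D *m t m == t m *m D.
  apply/eqP; rewrite /D -{1}e1 -e2 !mulmxA -(mulmxA A2 (adj A1) A1) adjK // mulmx1.
  by rewrite -(mulmxA _ (adj A2) A2) adjK // mulmx1.
have dD : is_diag_mx D by move: cD; rewrite cent // => /andP [].
have eA2 : A2 = D *m A1 by rewrite /D -mulmxA adjK // mulmx1.
have z2' : A1 u k = 0.
  move: z2; rewrite eA2 (diag_mulE _ _ dD uuvw) => /eqP; rewrite mulf_eq0.
  by rewrite (negbTE (diag_nz sD dD uuvw)) /= => /eqP.
have [uv uw] : u != v /\ u != w.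
  by move: uuvw => /=; rewrite !inE negb_or => /andP [/andP [-> ->] _].
have [zvi nzui] := row_zero sA1 uijk z1 z2' uv.
have [zwi _] := row_zero sA1 uijk z1 z2' uw.
exists (A1 *m P); split; first by rewrite SU3M.
have E : conj_rep (A1 *m P) rho = conj_rep A1 r.
  apply: functional_extensionality => x.
  by rewrite /r /conj_rep !SU3_inv ?SU3M // adjM !mulmxA.
rewrite E /=; split.
- by split; [exact: in_S_cj | exact: e1'].
- move=> x xA; have [h1 h2] := HA x xA.
  have s3 := fun F => sum3 F uijk.
  rewrite /entry_vanishes /conj_rep SU3_inv // !mxE !s3 !mxE !s3.
  by rewrite z1 z2' h1 h2 zvi zwi !(mul0r, mulr0, add0r, addr0, rmorph0).
- exists (adj A1); split; first exact: SU3_adj.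
    rewrite /conj_rep (SU3_inv (SU3_adj sA1)) adj_adj (SU3_inv sA1) !mulmxA adjK // mul1mx.
    by rewrite -mulmxA adjK // mulmx1.
  by rewrite adjE zvi rmorph0.
- exists (adj A1); split; first exact: SU3_adj.
    rewrite /conj_rep (SU3_inv (SU3_adj sA1)) adj_adj (SU3_inv sA1) !mulmxA adjK // mul1mx.
    by rewrite -mulmxA adjK // mulmx1.
  by rewrite adjE zwi rmorph0.
Qed.

End H.

Theorem lemma2p6 (R : realType) (g n : nat) (t : 'I_n -> 'M[R[i]]_3)
  (l m : 'I_n) (A : {set gen g n}) (i j k u v w : 'I_3) :
  (2 <= g)%N -> (2 <= n)%N ->
  generic t ->
  l != m ->
  gc l \notin A -> gc m \notin A ->
  uniq [:: i; j; k] -> uniq [:: u; v; w] ->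
  forall rho : gen g n -> 'M[R[i]]_3,
    in_S t rho ->
    (locus t l m A i j k u rho <-> locus t m l A u v w i rho).
Proof.
move=> _ _ gt _ _ _ uijk uuvw rho _; split.
- exact: (dir gt uijk uuvw).
- exact: (dir gt uuvw uijk).
Qed.
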